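(* Let $\alpha,\beta$ satisfy $\alpha+\beta=-1$. For every $n\geq1$, $$\sum_{\sigma\in\mathfrak S_{n+1}}u^{{\rm M}(\sigma)}\alpha^{{\rm LRmin}(\sigma)-1}\beta^{{\rm RLmin}(\sigma)-1}=\begin{cases}(1-u)^{\lfloor n/2\rfloor},& n\text{ even},\\ -(1-u)^{\lfloor n/2\rfloor},& n\text{ odd}.\end{cases}$$
   Context: For $\sigma=\sigma_1\cdots\sigma_m\in\mathfrak S_m$: ${\rm M}(\sigma)$ (interior peaks) is the number of $i$ with $1<i<m$ and $\sigma_{i-1}<\sigma_i>\sigma_{i+1}$; ${\rm LRmin}(\sigma)$ is the number of $i$ with $\sigma_j>\sigma_i$ for all $j<i$; ${\rm RLmin}(\sigma)$ is the number of $i$ with $\sigma_j>\sigma_i$ for all $j>i$. *)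

(* Defs.v *)
From HB Require Import structures.
From mathcomp Require Import all_boot all_order all_algebra all_fingroup.
Set Implicit Arguments. Unset Strict Implicit. Unset Printing Implicit Defensive.

(* A permutation sigma of {0,...,m-1} (values shifted by one from the paper's
   {1,...,m}, which does not affect the order-based statistics) is viewed as the
   word sigma_0 sigma_1 ... sigma_{m-1}; positions are 0-indexed. *)
Definition perm_word (m : nat) (s : {perm 'I_m}) : seq nat :=
  [seq val (s i) | i <- enum 'I_m].

Definition peaks (w : seq nat) : nat :=
  #|[set i : 'I_(size w) | (0 < val i) && (val i < (size w).-1) &&
       (nth 0 w (val i).-1 < nth 0 w (val i)) &&
       (nth 0 w (val i).+1 < nth 0 w (val i))]|.

Definition lrmin (w : seq nat) : nat :=
  #|[set i : 'I_(size w) |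
       [forall j : 'I_(size w), (val j < val i) ==> (nth 0 w (val i) < nth 0 w (val j))]]|.

Definition rlmin (w : seq nat) : nat :=
  #|[set i : 'I_(size w) |
       [forall j : 'I_(size w), (val i < val j) ==> (nth 0 w (val i) < nth 0 w (val j))]]|.

(* Main.v *)
Require Import Defs.
From HB Require Import structures.
From mathcomp Require Import all_boot all_order all_algebra all_fingroup.
From mathcomp Require Import zify ring lra.
Import GRing.Theory.

Lemma card_iota n (P : nat -> bool) :
  #|[set i : 'I_n | P (val i)]| = count P (iota 0 n).
Proof.
rewrite cardsE cardE /enum_mem size_filter -val_enum_ord count_map.
by rewrite enumT.
Qed.

Lemma forall_lt n i (Q : nat -> bool) : i <= n ->
  [forall j : 'I_n, (val j < i) ==> Q (val j)] = all Q (iota 0 i).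
Proof.
move=> le_in; apply/forallP/allP => [H j|H j].
  rewrite mem_iota /= => ltji.
  have ltjn : j < n by apply: leq_trans ltji le_in.
  by have := H (Ordinal ltjn); rewrite /= ltji.
by apply/implyP => ltji; apply: H; rewrite mem_iota.
Qed.

Lemma forall_gt n i (Q : nat -> bool) :
  [forall j : 'I_n, (i < val j) ==> Q (val j)] = all Q (iota i.+1 (n - i.+1)).
Proof.
apply/forallP/allP => [H j|H j].
  rewrite mem_iota => /andP[ltij ltjn].
  have ltjn' : j < n by move: ltjn; case: (ltnP i.+1 n) => h; lia.
  by have := H (Ordinal ltjn'); rewrite /= ltij.
apply/implyP => ltij; apply: H; rewrite mem_iota ltij /=.
have := ltn_ord j; lia.
Qed.

Definition isPk (w : seq nat) (i : nat) : bool :=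
  (0 < i) && (i < (size w).-1) && (nth 0 w i.-1 < nth 0 w i) &&
  (nth 0 w i.+1 < nth 0 w i).

Lemma peaks_count w : peaks w = count (isPk w) (iota 0 (size w)).
Proof. exact: (card_iota _ (isPk w)). Qed.

Lemma lrmin_count w : lrmin w =
  count (fun i => all (fun j => nth 0 w i < nth 0 w j) (iota 0 i)) (iota 0 (size w)).
Proof.
rewrite /lrmin (card_iota _ (fun i => [forall j : 'I_(size w),
   (val j < i) ==> (nth 0 w i < nth 0 w (val j))])).
apply: eq_in_count => i; rewrite mem_iota => /andP[_ h].
exact: (forall_lt (size w) i (fun j => nth 0 w i < nth 0 w j) (ltnW h)).
Qed.

Lemma rlmin_count w : rlmin w =
  count (fun i => all (fun j => nth 0 w i < nth 0 w j) (iota i.+1 (size w - i.+1)))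
    (iota 0 (size w)).
Proof.
rewrite /rlmin (card_iota _ (fun i => [forall j : 'I_(size w),
   (i < val j) ==> (nth 0 w i < nth 0 w (val j))])).
apply: eq_in_count => i _.
exact: (forall_gt _ _ (fun j => nth 0 w i < nth 0 w j)).
Qed.

Lemma all_nth (P : pred nat) w : all P w = all (fun j => P (nth 0 w j)) (iota 0 (size w)).
Proof. by rewrite -{1}(mkseq_nth 0 w) /mkseq all_map. Qed.

Lemma iota1 n : iota 1 n = [seq i.+1 | i <- iota 0 n].
Proof. exact: (iotaDl 1 0 n). Qed.

Lemma iotaSS m n : iota m.+1 n = [seq i.+1 | i <- iota m n].
Proof. exact: (iotaDl 1 m n). Qed.

Lemma iotaS0 n : iota 0 n.+1 = 0 :: [seq i.+1 | i <- iota 0 n].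
Proof. by rewrite /= iota1. Qed.

Lemma rl_cons x w : rlmin (x :: w) = all (fun y => x < y) w + rlmin w.
Proof.
rewrite !rlmin_count /= subn1 /= iota1 all_map [in RHS]all_nth.
congr (_ + _); rewrite count_map; apply: eq_count => i /=.
rewrite subSS iotaSS all_map; apply: eq_all => j //=.
Qed.

Lemma lr_rcons w x : lrmin (rcons w x) = all (fun y => x < y) w + lrmin w.
Proof.
rewrite !lrmin_count size_rcons -addn1 iotaD count_cat /= add0n addn0 addnC.
congr (_ + _).
  rewrite nth_rcons ltnn eqxx [in RHS]all_nth; congr (nat_of_bool _).
  by apply: eq_in_all => j; rewrite mem_iota nth_rcons => /andP[_ ->].
apply: eq_in_count => i; rewrite mem_iota nth_rcons => /andP[_ hi]; rewrite hi.
apply: eq_in_all => j; rewrite mem_iota nth_rcons => /andP[_ hj].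
by rewrite (ltn_trans hj hi).
Qed.

Definition ph (x : nat) (w : seq nat) : bool :=
  if w is y :: z :: _ then (x < y) && (z < y) else false.

Lemma isPk0 w : isPk w 0 = false.
Proof. by []. Qed.

Lemma isPk_last w : isPk w (size w).-1 = false.
Proof. by rewrite /isPk ltnn !andbF. Qed.

Lemma isPk_cons x w j : isPk (x :: w) j.+1 = if j == 0 then ph x w else isPk w j.
Proof.
rewrite /isPk /=; case: j => [|j] /=.
  by case: w => [|y [|z w]] //=; rewrite andbT.
by case: w => [|y w] //=.
Qed.

Lemma peaks_cons x w : peaks (x :: w) = ph x w + peaks w.
Proof.
rewrite !peaks_count /= iota1 count_map.
rewrite (@eq_count _ _ (fun j => if j == 0 then ph x w else isPk w j));
  last by move=> j /=; rewrite isPk_cons.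
case: w => [|y w] //=.
rewrite /= iota1 count_map add0n; congr (_ + _).
by rewrite count_map.
Qed.

Lemma all_lt_eq0 k (w : seq nat) : all (fun y => y < k) w ->
  all (fun y => k < y) w = (w == [::]).
Proof.
case: w => [|y w] //= /andP[hy _].
by apply/negbTE; rewrite negb_and -leqNgt ltnW.
Qed.

Lemma lr_ins a b k : all (fun y => y < k) (a ++ b) ->
  lrmin (a ++ k :: b) = (a == [::]) + lrmin (a ++ b).
Proof.
elim/last_ind: b => [|b y IH].
  by rewrite !cats0 cats1 lr_rcons => h; rewrite (all_lt_eq0 _ _ h).
rewrite -!rcons_cat -rcons_cons -rcons_cat !lr_rcons all_rcons => /andP[hy hab].
rewrite IH // !all_cat /= hy /=; lia.
Qed.

Lemma rl_ins a b k : all (fun y => y < k) (a ++ b) ->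
  rlmin (a ++ k :: b) = (b == [::]) + rlmin (a ++ b).
Proof.
elim: a => [|x a IH] /=.
  by rewrite rl_cons => h; rewrite (all_lt_eq0 _ _ h).
move=> /andP[hx hab]; rewrite !rl_cons IH // !all_cat /= hx /=; lia.
Qed.

Lemma ph_lt k w : all (fun y => y < k) w -> ph k w = false.
Proof.
case: w => [|y [|z w]] //= /and3P[hy hz _].
by apply/negbTE; rewrite negb_and -leqNgt ltnW.
Qed.

Lemma peaks_front k w : all (fun y => y < k) w -> peaks (k :: w) = peaks w.
Proof. by move=> h; rewrite peaks_cons (ph_lt _ _ h). Qed.

Lemma peaks_back k w : all (fun y => y < k) w -> peaks (rcons w k) = peaks w.
Proof.
elim: w => [|x w IH]; first by rewrite !peaks_count.
move=> /= /andP[hx hw].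
rewrite !peaks_cons IH //; congr (_ + _).
case: w hw {IH} => [|y [|z w]] //=.
by rewrite andbT => hy; rewrite [(k < y)]ltnNge (ltnW hy) andbF.
Qed.

Lemma peaks_ins i k w : all (fun y => y < k) w -> 0 < i < size w ->
  peaks (take i w ++ k :: drop i w) + isPk w i.-1 + isPk w i = (peaks w).+1.
Proof.
elim: w i => [|x w IH] i; first by rewrite ltn0 andbF.
move=> /= /andP[hx hw]; case: i => [|i] //= hi.
rewrite !peaks_cons.
case: i hi => [|i] hi.
  rewrite take0 drop0 /= peaks_front // (isPk_cons x w 0) /=.
  case: w hi {IH} hw => [|y w] //= _ /andP[hy _]; rewrite hx hy /=; lia.
have IH' := IH i.+1 hw hi.
rewrite isPk_cons isPk_cons /= in IH' *.
case: i hi IH' => [|i] hi IH'.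
  case: w hi hw {IH} IH' => [|y w] //= hi /andP[hy _].
  rewrite take0 /= [k < y]ltnNge (ltnW hy) andbF /=.
  lia.
case: w hi hw {IH} IH' => [|y [|z w]] //= hi hw IH'.
lia.
Qed.

Lemma lr_pos w : w != [::] -> 0 < lrmin w.
Proof.
elim/last_ind: w => [|w x IH] // _; rewrite lr_rcons.
case E: (w == [::]); first by move/eqP: E => ->; rewrite lrmin_count.
have := IH (negbT E); lia.
Qed.

Lemma rl_pos w : w != [::] -> 0 < rlmin w.
Proof.
elim: w => [|x w IH] // _; rewrite rl_cons.
case E: (w == [::]); first by move/eqP: E => ->; rewrite rlmin_count.
have := IH (negbT E); lia.
Qed.

Lemma isPk_adj w i : 0 < i -> isPk w i.-1 && isPk w i = false.
Proof.
case: i => // i _ /=; apply/negP; rewrite /isPk /=; lia.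
Qed.

Definition adj w i := isPk w i.-1 || isPk w i.

Lemma count_adj w : w != [::] ->
  count (adj w) (iota 1 (size w).-1) = 2 * peaks w.
Proof.
case: w => [|x w0] // _; set w := x :: w0; rewrite /= -/w.
have h0 : count (predI (fun i => isPk w i.-1) (isPk w)) (iota 1 (size w0)) = 0.
  rewrite (@eq_in_count _ _ pred0) ?count_pred0 //.
  by move=> j; rewrite mem_iota => /andP[hj _]; rewrite /= isPk_adj.
have := count_predUI (fun i => isPk w i.-1) (isPk w) (iota 1 (size w0)).
rewrite h0 addn0 /adj => ->.
have e1 : count (isPk w) (iota 0 (size w0).+1) = count (isPk w) (iota 0 (size w0)).
  rewrite -addn1 iotaD count_cat /= addn0.
  have -> : isPk w (size w0) = false by exact: (isPk_last w).
  by rewrite addn0.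
have e2 : count (isPk w) (iota 0 (size w0).+1) = count (isPk w) (iota 1 (size w0)).
  by [].
rewrite peaks_count; change (size w) with (size w0).+1.
rewrite -e2 iota1 count_map.
rewrite [count (preim _ _) _](_ : _ = count (isPk w) (iota 0 (size w0)));
  last by apply: eq_count.
rewrite e1; lia.
Qed.

Definition ins (i k : nat) (w : seq nat) := take i w ++ k :: drop i w.

Lemma perm_ins i k w : perm_eq (ins i k w) (k :: w).
Proof. by rewrite /ins -cat1s perm_catCA /= cat_take_drop. Qed.

Lemma perm_iotaS k : perm_eq (k :: iota 0 k) (iota 0 k.+1).
Proof. by rewrite -addn1 iotaD /= cats1 perm_sym; apply/permPl; exact: perm_rcons. Qed.

Lemma ins_inj k i j w w' : k \notin w -> k \notin w' -> i <= size w -> j <= size w' ->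
  ins i k w = ins j k w' -> w = w' /\ i = j.
Proof.
move=> kw kw' iw jw' e.
have hi : index k (ins i k w) = i.
  rewrite /ins index_cat ifN; first by rewrite size_takel //= eqxx addn0.
  by apply: contra kw; apply: mem_take.
have hj : index k (ins j k w') = j.
  rewrite /ins index_cat ifN; first by rewrite size_takel //= eqxx addn0.
  by apply: contra kw'; apply: mem_take.
have eij : i = j by rewrite -hi -hj e.
subst j; split=> //.
have t1 : take i (ins i k w) = take i w by rewrite /ins take_size_cat // size_takel.
have t2 : take i (ins i k w') = take i w' by rewrite /ins take_size_cat // size_takel.
have d1 : drop i.+1 (ins i k w) = drop i w.
  by rewrite /ins -cat_rcons drop_size_cat // size_rcons size_takel.
have d2 : drop i.+1 (ins i k w') = drop i w'.
  by rewrite /ins -cat_rcons drop_size_cat // size_rcons size_takel.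
by rewrite -(cat_take_drop i w) -(cat_take_drop i w') -t1 -t2 -d1 -d2 e.
Qed.

Lemma perms_rec (R : nmodType) k (F : seq nat -> R) :
  (\sum_(w <- permutations (iota 0 k.+1)) F w =
  \sum_(w <- permutations (iota 0 k)) \sum_(i <- iota 0 k.+1) F (ins i k w))%R.
Proof.
rewrite -(big_allpairs_dep (h := fun w i => ins i k w)).
apply: perm_big; apply: uniq_perm.
- exact: permutations_uniq.
- apply: allpairs_uniq; [exact: permutations_uniq | exact: iota_uniq |].
  move=> [w i] [w' j] h1 h2 e.
  case/allpairsP: h1 => [[w1 i1] [hw1 hi1 /= [e1 e2]]]; subst w1 i1.
  case/allpairsP: h2 => [[w2 i2] [hw2 hi2 /= [e1 e2]]]; subst w2 i2.
  rename w into w1; rename i into i1; rename w' into w2; rename j into i2.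
  move: hw1 hw2 hi1 hi2; rewrite !mem_permutations !mem_iota /= => p1 p2 h1 h2.
  have H1 : k \notin w1 by rewrite (perm_mem p1) mem_iota ltnn andbF.
  have H2 : k \notin w2 by rewrite (perm_mem p2) mem_iota ltnn andbF.
  have H3 : i1 <= size w1 by rewrite (perm_size p1) size_iota; lia.
  have H4 : i2 <= size w2 by rewrite (perm_size p2) size_iota; lia.
  by have [-> ->] := ins_inj k i1 i2 w1 w2 H1 H2 H3 H4 e.
move=> v; rewrite mem_permutations; apply/idP/allpairsP.
- move=> pv.
  have kv : k \in v by rewrite (perm_mem pv) mem_iota /=; lia.
  set i := index k v.
  have iv : i < size v by rewrite index_mem.
  have ev : take i v ++ k :: drop i.+1 v = v.
    have e := drop_nth 0 iv; rewrite {2}/i nth_index // in e.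
    by rewrite -e cat_take_drop.
  exists (take i v ++ drop i.+1 v, i) => /=; split.
  + rewrite mem_permutations -(perm_cons k).
    apply: (perm_trans _ (perm_trans pv _)); last by rewrite perm_sym perm_iotaS.
    rewrite -[X in perm_eq _ X]ev -cat1s perm_catCA /=.
    by [].
  + change (i \in iota 0 k.+1); rewrite mem_iota /=.
    by move: iv; rewrite (perm_size pv) size_iota.
  + rewrite /ins take_size_cat ?size_takel ?(ltnW iv) //.
    rewrite drop_size_cat ?size_takel ?(ltnW iv) //.
- move=> [[w i] [hw hi /= ->]]; move: hw; rewrite mem_permutations => pw.
  apply: (perm_trans (perm_ins i k w)).
  by apply: (perm_trans _ (perm_iotaS k)); rewrite perm_cons.
Qed.

Lemma perm_word_inj n : injective (@perm_word n).
Proof.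
move=> s t /eq_in_map e; apply/permP => i; apply: val_inj.
by apply: e; rewrite mem_enum.
Qed.

Lemma perm_word_perm n (s : {perm 'I_n}) : perm_eq (perm_word s) (iota 0 n).
Proof.
rewrite /perm_word -val_enum_ord (map_comp val s) perm_map //.
apply: uniq_perm; first by rewrite map_inj_uniq ?enum_uniq //; exact: perm_inj.
  exact: enum_uniq.
move=> x; rewrite mem_enum; apply/mapP; exists (s^-1 x)%g; first by rewrite mem_enum.
by rewrite permKV.
Qed.

Lemma perm_word_surj m v : perm_eq v (iota 0 m.+1) ->
  exists s : {perm 'I_m.+1}, perm_word s = v.
Proof.
move=> pv.
have sv : size v = m.+1 by rewrite (perm_size pv) size_iota.
have uv : uniq v by rewrite (perm_uniq pv) iota_uniq.
have lt (i : 'I_m.+1) : nth 0 v i < m.+1.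
  have : nth 0 v i \in v by rewrite mem_nth // sv.
  by rewrite (perm_mem pv) mem_iota.
pose f (i : 'I_m.+1) : 'I_m.+1 := inord (nth 0 v i).
have finj : injective f.
  move=> i j /(congr1 val); rewrite /f /= !inordK // => /eqP.
  by rewrite nth_uniq ?sv // => /eqP /val_inj.
exists (perm finj); rewrite /perm_word.
rewrite (@eq_map _ _ _ (fun i => nth 0 v (val i))); last first.
  by move=> i; rewrite permE /f /= inordK.
by rewrite (map_comp (nth 0 v) val) val_enum_ord -sv -/(mkseq _ _) mkseq_nth.
Qed.

Lemma perm_words (R : nmodType) m (F : seq nat -> R) :
  (\sum_(s : {perm 'I_m.+1}) F (perm_word s) =
   \sum_(w <- permutations (iota 0 m.+1)) F w)%R.
Proof.
rewrite -(big_map (@perm_word m.+1) xpredT F).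
apply: perm_big; apply: uniq_perm.
- by rewrite map_inj_uniq ?index_enum_uniq //; exact: perm_word_inj.
- exact: permutations_uniq.
move=> v; rewrite mem_permutations; apply/mapP/idP.
  by move=> [s _ ->]; exact: perm_word_perm.
move=> /perm_word_surj [s <-]; exists s => //; by rewrite mem_index_enum.
Qed.

Section Alg.
Variable R : comNzRingType.
Local Open Scope ring_scope.

Lemma bin_rel (j q : nat) :
  (q.+1)%:R * ('C(j, q.+1))%:R = (j%:R - q%:R) * ('C(j, q))%:R :> R.
Proof.
case: (leqP q j) => hq.
  by rewrite -natrB // -!natrM mul_bin_left.
by rewrite !bin_small ?mulr0 //; lia.
Qed.

Lemma coef_id (g : nat -> R) (j k' : nat) (b : bool) : k' = (2 * j + b)%N ->
  forall q : nat,
  (-1) ^+ q * ('C(j, q))%:R * (-1 + (2 * q)%:R) * g q +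
  (if q is q1.+1 then (-1) ^+ q1 * ('C(j, q1))%:R * (k'%:R - (2 * q1)%:R) * g q
   else 0)
  = - ((-1) ^+ q * ('C(j + b, q))%:R * g q).
Proof.
move=> ek [|q1].
  by rewrite !bin0 !expr0 !mul1r muln0 !addr0 mulN1r.
have Hrel := bin_rel j q1.
have eC : ('C(j + b, q1.+1))%:R = ('C(j, q1.+1))%:R + (b%:R * ('C(j, q1))%:R) :> R.
  case: b {ek} => /=; last by rewrite addn0 mul0r addr0.
  by rewrite addn1 binS natrD mul1r.
rewrite eC ek !natrD !natrM.
set A := ('C(j, q1))%:R : R; set B := ('C(j, q1.+1))%:R : R.
move: Hrel; rewrite -/A -/B -addn1 natrD => Hrel.
apply/eqP; rewrite -subr_eq0; apply/eqP.
transitivity ((-1) ^+ q1 * g q1.+1 * 2%:R * ((j%:R - q1%:R) * A - (q1%:R + 1%:R) * B)).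
  rewrite exprD expr1 addn1; ring.
by rewrite -Hrel subrr !mulr0.
Qed.


Lemma binom_step (g : nat -> R) (j k' : nat) (b : bool) : k' = (2 * j + b)%N ->
  \sum_(0 <= q < j.+1) (-1) ^+ q * ('C(j, q))%:R *
     (- g q + (2 * q)%:R * g q + (k'%:R - (2 * q)%:R) * g q.+1)
  = - \sum_(0 <= q < (j + b).+1) (-1) ^+ q * ('C(j + b, q))%:R * g q.
Proof.
move=> ek.
pose P q := (-1) ^+ q * ('C(j, q))%:R * (-1 + (2 * q)%:R) * g q.
pose T q := (-1) ^+ q * ('C(j, q))%:R * (k'%:R - (2 * q)%:R) * g q.+1.
pose G q := if q is q1.+1 then T q1 else 0.
have e1 : \sum_(0 <= q < j.+1) (-1) ^+ q * ('C(j, q))%:R *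
     (- g q + (2 * q)%:R * g q + (k'%:R - (2 * q)%:R) * g q.+1)
   = \sum_(0 <= q < j.+1) (P q + T q).
  by apply: eq_big_nat => q _; rewrite /P /T; ring.
have eP : \sum_(0 <= q < j.+1) P q = \sum_(0 <= q < j.+2) P q.
  by rewrite (big_nat_recr j.+1) //= /P bin_small // !mulr0 !mul0r addr0.
have eT : \sum_(0 <= q < j.+1) T q = \sum_(0 <= q < j.+2) G q.
  by rewrite (big_nat_recl j.+1) //= add0r.
have eR : \sum_(0 <= q < (j + b).+1) (-1) ^+ q * ('C(j + b, q))%:R * g q =
          \sum_(0 <= q < j.+2) (-1) ^+ q * ('C(j + b, q))%:R * g q.
  case: b {ek} => /=; first by rewrite addn1.
  by rewrite addn0 (big_nat_recr j.+1) //= bin_small // !mulr0 !mul0r addr0.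
rewrite e1 big_split /= eP eT -big_split eR -sumrN.
apply: eq_big_nat => q _.
rewrite /P /G /T; case: q => [|q];
  [exact: (coef_id g _ _ _ ek 0) | exact: (coef_id g _ _ _ ek q.+1)].
Qed.

End Alg.




Section Main.
Variable R : comNzRingType.
Variables u alpha beta : R.
Hypothesis Hab : (alpha + beta = -1)%R.
Local Open Scope ring_scope.

Lemma sum_if (I : Type) (s : seq I) (P : pred I) (A B : R) :
  \sum_(i <- s) (if P i then A else B) =
   (count P s)%:R * A + (count (predC P) s)%:R * B.
Proof.
elim: s => [|x s IH]; first by rewrite big_nil !mul0r addr0.
rewrite big_cons IH /=; case: (P x) => /=; rewrite !natrD; ring.
Qed.

Definition wt (w : seq nat) : R := alpha ^+ (lrmin w).-1 * beta ^+ (rlmin w).-1.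

Definition S k (g : nat -> R) :=
  \sum_(w <- permutations (iota 0 k)) wt w * g (peaks w).

Definition h k (g : nat -> R) (q : nat) :=
  - g q + (2 * q)%:R * g q + ((k.-1)%:R - (2 * q)%:R) * g q.+1.

Lemma ins_sum k w g : perm_eq w (iota 0 k) -> (0 < k)%N ->
  \sum_(i <- iota 0 k.+1) wt (ins i k w) * g (peaks (ins i k w)) =
  wt w * h k g (peaks w).
Proof.
case: k => [//|k] pw _.
have sw : size w = k.+1 by rewrite (perm_size pw) size_iota.
have Hall : all (fun y => (y < k.+1)%N) w.
  by apply/allP => y; rewrite (perm_mem pw) mem_iota.
have wne : w != [::] by rewrite -size_eq0 sw.
have -> : iota 0 k.+2 = 0 :: (iota 1 k ++ [:: k.+1]).
  have e := iotaD 1 k 1; rewrite addn1 add1n in e.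
  by change (iota 0 k.+2) with (0 :: iota 1 k.+1); rewrite e.
rewrite big_cons big_cat big_seq1 /=.
have lrp := lr_pos w wne; have rlp := rl_pos w wne.
have W0 : wt (ins 0 k.+1 w) = alpha * wt w.
  have e0 : ins 0 k.+1 w = [::] ++ k.+1 :: w by rewrite /ins take0 drop0.
  rewrite /wt e0 (lr_ins [::] w _ Hall) (rl_ins [::] w _ Hall) /= (negbTE wne) add0n.
  by move: lrp; case: (lrmin w) => [//|l] _; rewrite /= exprS mulrA.
have P0 : peaks (ins 0 k.+1 w) = peaks w.
  by rewrite /ins take0 drop0 /= peaks_front.
have Hall' : all (fun y => (y < k.+1)%N) (w ++ [::]) by rewrite cats0.
have ek : ins k.+1 k.+1 w = w ++ k.+1 :: [::].
  by rewrite /ins -sw take_size drop_size.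
have Wk : wt (ins k.+1 k.+1 w) = beta * wt w.
  rewrite /wt ek (lr_ins w [::] _ Hall') (rl_ins w [::] _ Hall') cats0 (negbTE wne) /= add0n.
  by move: rlp; case: (rlmin w) => [//|l] _; rewrite /= exprS; ring.
have Pk : peaks (ins k.+1 k.+1 w) = peaks w by rewrite ek cats1 peaks_back.
rewrite W0 P0 Wk Pk.
set p := peaks w.
rewrite (@eq_big_seq _ _ _ _ _ _ (fun i => wt w * (if adj w i then g p else g p.+1))); last first.
  move=> i; rewrite mem_iota => /andP[hi1 hi2].
  have hik : (0 < i < size w)%N by rewrite sw; lia.
  have Ht : (take i w == [::]) = false.
    apply/eqP => e; have := congr1 size e; rewrite size_takel /=; [lia | rewrite sw; lia].
  have Hd : (drop i w == [::]) = false.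
    apply/eqP => e; have := congr1 size e; rewrite size_drop sw /=; lia.
  have Hall2 : all (fun y => (y < k.+1)%N) (take i w ++ drop i w) by rewrite cat_take_drop.
  rewrite /wt /ins (lr_ins _ _ _ Hall2) (rl_ins _ _ _ Hall2) Ht Hd !add0n cat_take_drop.
  congr (_ * _).
  have := peaks_ins _ _ _ Hall hik; have := isPk_adj w i hi1.
  rewrite /adj -/p.
  case: (isPk w i.-1); case: (isPk w i) => //= _ e.
  - by move: e; rewrite addn0 addn1 => -[->].
  - by move: e; rewrite addn0 addn1 => -[->].
  - by move: e; rewrite !addn0 => ->.
rewrite -big_distrr /= sum_if.
have ca := count_adj w wne; rewrite sw /= -/p in ca; rewrite ca.
have cc := count_predC (adj w) (iota 1 k); rewrite size_iota ca in cc.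
have -> : (count (predC (adj w)) (iota 1 k))%:R = k%:R - (2 * p)%:R :> R.
  by apply/eqP; rewrite eq_sym subr_eq -natrD addnC cc.
rewrite /h.
have -> : alpha = -1 - beta by rewrite -Hab; ring.
ring.
Qed.


Lemma S_step k g : (0 < k)%N -> S k.+1 g = S k (h k g).
Proof.
move=> k0; rewrite /S (perms_rec _ k (fun v => wt v * g (peaks v))).
rewrite big_seq [RHS]big_seq; apply: eq_bigr => w.
by rewrite mem_permutations => pw; exact: ins_sum.
Qed.

Lemma S_closed k : (0 < k)%N -> forall g, S k g =
  (-1) ^+ k.-1 * \sum_(0 <= q < ((k.-1)./2).+1)
     (-1) ^+ q * ('C((k.-1)./2, q))%:R * g q.
Proof.
elim: k => [//|k IH] _ g.
case: k IH => [|k] IH.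
  rewrite /S (_ : permutations (iota 0 1) = [:: [:: 0]]) // big_seq1.
  rewrite big_nat1 /wt.
  have -> : lrmin [:: 0] = 1%N by rewrite lrmin_count.
  have -> : rlmin [:: 0] = 1%N by rewrite rlmin_count.
  have -> : peaks [:: 0] = 0%N by rewrite peaks_count.
  by rewrite /= !expr0 !mul1r.
rewrite S_step // IH //.
set k' := k.+1.-1.
have ek : k' = (2 * k'./2 + odd k')%N.
  by rewrite -{1}(odd_double_half k') -muln2 mulnC addnC.
rewrite /h.
rewrite (binom_step _ g _ _ _ ek).
have -> : ((k.+2).-1)./2 = (k'./2 + odd k')%N.
  by rewrite /k' /= uphalf_half addnC.
by rewrite /k' /= exprS mulN1r mulrN mulNr.
Qed.

End Main.


Local Open Scope ring_scope.

Theorem theorem1p6 (R : comNzRingType) (u alpha beta : R) (n : nat) :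
  alpha + beta = -1 -> (1 <= n)%N ->
  \sum_(s : {perm 'I_n.+1})
     u ^+ peaks (perm_word s) * alpha ^+ (lrmin (perm_word s)).-1
       * beta ^+ (rlmin (perm_word s)).-1
  = (if odd n then - (1 - u) ^+ n./2 else (1 - u) ^+ n./2).
Proof.
move=> Hab n1.
rewrite (perm_words _ n (fun w => u ^+ peaks w * alpha ^+ (lrmin w).-1
       * beta ^+ (rlmin w).-1)%R).
have := S_closed _ _ _ Hab n.+1 isT (fun q => u ^+ q)%R.
rewrite /S /wt /= => e.
rewrite (eq_bigr (fun w => alpha ^+ (lrmin w).-1 * beta ^+ (rlmin w).-1 * u ^+ peaks w)%R);
  last by move=> w _; ring.
rewrite e.
rewrite exprBn big_mkord.
rewrite (eq_bigr (fun i : 'I_(n./2).+1 => (-1) ^+ i * 1 ^+ (n./2 - i) * u ^+ i *+ 'C(n./2, i))%R);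
  last by move=> i _; rewrite expr1n mulr1 -mulr_natl; ring.
rewrite -signr_odd; case: (odd n); by rewrite ?expr0 ?expr1 ?mul1r ?mulN1r.
Qed.
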